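(* Let $d = 10$. (i) If $n = (4(12m+9)+2) + 4(6k+3)\sqrt{10}$ with $m, k \in \mathbb{Z}$, $m \equiv 4 \pmod 5$ and $k \equiv 2 \pmod 5$, then there exist infinitely many $D(n)$-quadruples in $\mathbb{Z}[\sqrt{10}]$. (ii) If $n = (48m+2) + 24k\sqrt{10}$ with $m, k \in \mathbb{Z}$, $m \equiv 1 \pmod 5$ and $k \equiv 0 \pmod 5$, then there exist infinitely many $D(n)$-quadruples in $\mathbb{Z}[\sqrt{10}]$.
   Context: For $n \in \mathbb{Z}[\sqrt{d}]$, a set $\{a_1,a_2,a_3,a_4\}$ of four distinct non-zero elements of $\mathbb{Z}[\sqrt{d}]$ is called a $D(n)$-quadruple in $\mathbb{Z}[\sqrt{d}]$ if $a_ia_j + n$ is a square of an element of $\mathbb{Z}[\sqrt{d}]$ for all $1 \le i < j \le 4$. *)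

(* Defs.v *)
From Stdlib Require Import ZArith List.
Import ListNotations.
Open Scope Z_scope.

(* Elements of Z[sqrt d] represented as pairs (x, y) meaning x + y*sqrt d. *)
Definition zsq : Type := (Z * Z)%type.

Definition zsq_mul (d : Z) (u v : zsq) : zsq :=
  (fst u * fst v + d * snd u * snd v, fst u * snd v + snd u * fst v).
Definition zsq_add (u v : zsq) : zsq := (fst u + fst v, snd u + snd v).

Definition is_square (d : Z) (u : zsq) : Prop := exists w : zsq, zsq_mul d w w = u.

Definition Dn_quadruple (d : Z) (n : zsq) (a1 a2 a3 a4 : zsq) : Prop :=
  NoDup [a1; a2; a3; a4] /\
  Forall (fun a => a <> (0, 0)) [a1; a2; a3; a4] /\
  is_square d (zsq_add (zsq_mul d a1 a2) n) /\
  is_square d (zsq_add (zsq_mul d a1 a3) n) /\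
  is_square d (zsq_add (zsq_mul d a1 a4) n) /\
  is_square d (zsq_add (zsq_mul d a2 a3) n) /\
  is_square d (zsq_add (zsq_mul d a2 a4) n) /\
  is_square d (zsq_add (zsq_mul d a3 a4) n).

Definition same_set (s t : list zsq) : Prop := forall x, In x s <-> In x t.

Definition infinitely_many_Dn_quadruples (d : Z) (n : zsq) : Prop :=
  forall L : list (list zsq),
    exists a1 a2 a3 a4 : zsq,
      Dn_quadruple d n a1 a2 a3 a4 /\
      forall s, In s L -> ~ same_set s [a1; a2; a3; a4].

(* Main.v *)
Require Import Defs.
From Stdlib Require Import ZArith List Lia.
Import ListNotations.
Open Scope Z_scope.

Definition zm := zsq_mul 10.
Definition Aq (x y : Z) : zsq := (2, 0).
Definition Bq (x y : Z) : zsq := (2*(x*x+10*y*y) - 2*x - 2, 4*x*y - 2*y).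
Definition Cq (x y : Z) : zsq := (2*(x*x+10*y*y) + 2*x + 2, 4*x*y + 2*y).
Definition Dq (x y : Z) : zsq := (8*(x*x+10*y*y) - 2, 16*x*y).

Ltac crush := unfold zm, zsq_mul, zsq_add, Aq, Bq, Cq, Dq; cbn [fst snd]; f_equal; ring.

Lemma quad_sq (l1 l2 x y : Z) :
  let lam := (l1,l2) in let n := zm (zm lam lam) (8*x+5, 8*y) in
  is_square 10 (zsq_add (zsq_mul 10 (zm lam (Aq x y)) (zm lam (Bq x y))) n) /\
  is_square 10 (zsq_add (zsq_mul 10 (zm lam (Aq x y)) (zm lam (Cq x y))) n) /\
  is_square 10 (zsq_add (zsq_mul 10 (zm lam (Aq x y)) (zm lam (Dq x y))) n) /\
  is_square 10 (zsq_add (zsq_mul 10 (zm lam (Bq x y)) (zm lam (Cq x y))) n) /\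
  is_square 10 (zsq_add (zsq_mul 10 (zm lam (Bq x y)) (zm lam (Dq x y))) n) /\
  is_square 10 (zsq_add (zsq_mul 10 (zm lam (Cq x y)) (zm lam (Dq x y))) n).
Proof.
  intros lam n; subst lam n.
  split; [exists (zm (l1,l2) (2*x+1, 2*y)); crush|].
  split; [exists (zm (l1,l2) (2*x+3, 2*y)); crush|].
  split; [exists (zm (l1,l2) (4*x+1, 4*y)); crush|].
  split; [exists (zm (l1,l2) (2*(x*x+10*y*y)-1, 4*x*y)); crush|].
  split; [exists (zm (l1,l2) (4*(x*x+10*y*y)-2*x-3, 8*x*y-2*y)); crush|].
  exists (zm (l1,l2) (4*(x*x+10*y*y)+2*x+1, 8*x*y+2*y)); crush.
Qed.

Lemma zm_assoc (a b c : zsq) : zm a (zm b c) = zm (zm a b) c.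
Proof. destruct a, b, c; unfold zm, zsq_mul; cbn [fst snd]; f_equal; ring. Qed.

Lemma inj_lam (lam iota : zsq) (z : Z) : zm iota lam = (z, 0) -> z <> 0 ->
  forall u v, zm lam u = zm lam v -> u = v.
Proof.
  intros H Hz u v E.
  assert (E2 : zm iota (zm lam u) = zm iota (zm lam v)) by now rewrite E.
  rewrite !zm_assoc, H in E2. destruct u as [u1 u2], v as [v1 v2].
  unfold zm, zsq_mul in E2; cbn [fst snd] in E2. injection E2 as E3 E4.
  assert (u1 = v1) by nia. assert (u2 = v2) by nia. subst; auto.
Qed.

Lemma neq_y (x y a b : Z) : y <> 0 -> a * x + b <> 0 -> y * (a*x+b) <> 0.
Proof. intros Hy Hb H; apply Z.mul_eq_0 in H; tauto. Qed.

Lemma distinct_Q (x y : Z) : y <> 0 ->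
  Aq x y <> Bq x y /\ Aq x y <> Cq x y /\ Aq x y <> Dq x y /\
  Bq x y <> Cq x y /\ Bq x y <> Dq x y /\ Cq x y <> Dq x y /\
  Aq x y <> (0,0) /\ Bq x y <> (0,0) /\ Cq x y <> (0,0) /\ Dq x y <> (0,0).
Proof.
  intro Hy; unfold Aq, Bq, Cq, Dq.
  repeat split; intro H; apply pair_equal_spec in H as [H1 H2].
  - apply (neq_y x y 4 (-2)); [auto|lia|]. nia.
  - apply (neq_y x y 4 2); [auto|lia|]. nia.
  - assert (x = 0). { assert (H0 : x * y = 0) by lia. apply Z.mul_eq_0 in H0; lia. }
    subst. lia.
  - lia.
  - apply (neq_y x y 12 2); [auto|lia|]. nia.
  - apply (neq_y x y 12 (-2)); [auto|lia|]. nia.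
  - lia.
  - apply (neq_y x y 4 (-2)); [auto|lia|]. nia.
  - apply (neq_y x y 4 2); [auto|lia|]. nia.
  - assert (x = 0). { assert (H0 : x * y = 0) by lia. apply Z.mul_eq_0 in H0; lia. }
    subst. lia.
Qed.

Lemma units_exist (s : nat) : exists v w, (8*v+1)*(8*v+1) - 10*(4*w)*(4*w) = 1 /\
  0 <= v /\ 0 <= w /\ Z.of_nat s <= 4*w.
Proof.
  induction s as [|s IH].
  - exists 0, 0; lia.
  - destruct IH as [v [w [H1 [H2 [H3 H4]]]]].
    exists (721*v + 90 + 1140*w), (456*v + 57 + 721*w).
    split; [|lia].
    transitivity (((8*v+1)*(8*v+1) - 10*(4*w)*(4*w)) * (721*721 - 10*228*228)); [ring|].
    rewrite H1; reflexivity.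
Qed.

Lemma key_id (c nu0 : zsq) (e1 e2 : Z) :
  zm (zm (zm c (e1,e2)) (zm c (e1,e2))) (zm nu0 (zm (e1,-e2) (e1,-e2))) =
  zm (zm (zm c c) nu0) ((e1*e1-10*e2*e2)*(e1*e1-10*e2*e2), 0).
Proof. destruct c, nu0; unfold zm, zsq_mul; cbn [fst snd]; f_equal; ring. Qed.

Lemma ynz (x0 y0 g1 g2 : Z) : g1*g1 - 10*g2*g2 = 1 -> x0 <> 0 -> y0*y0 < g2*g2 ->
  x0*g2 + y0*g1 <> 0.
Proof.
  intros Hn Hx Hlt H.
  assert (E : x0*g2 = - y0*g1) by lia.
  assert (E2 : (x0*g2)*(x0*g2) = (y0*g1)*(y0*g1)) by (rewrite E; ring).
  assert (E3 : g2*g2*(x0*x0 - 10*y0*y0) = y0*y0).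
  { transitivity ((x0*g2)*(x0*g2) - 10*(y0*y0)*(g2*g2)); [ring|].
    rewrite E2. transitivity (y0*y0*(g1*g1-10*g2*g2)); [ring|]. rewrite Hn; ring. }
  destruct (Z_le_gt_dec 1 (x0*x0 - 10*y0*y0)) as [Hp|Hp].
  - assert (g2*g2 <= g2*g2*(x0*x0 - 10*y0*y0)).
    { assert (0 <= g2*g2) by nia. nia. }
    lia.
  - assert (g2*g2*(x0*x0 - 10*y0*y0) <= 0).
    { assert (0 <= g2*g2) by nia. nia. }
    assert (y0*y0 = 0) by nia.
    assert (y0 = 0) by nia. subst y0.
    assert (g2 <> 0) by (intro; subst; lia).
    assert (x0 * g2 = 0) by lia. apply Z.mul_eq_0 in H3. tauto.
Qed.

Fixpoint bnd (L : list (list zsq)) : Z :=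
  match L with
  | [] => 0
  | s :: L' => fold_right (fun x acc => Z.abs (fst x) + acc) 0 s + bnd L'
  end.

Lemma bnd_in_aux (s : list zsq) x : In x s -> Z.abs (fst x) <= fold_right (fun x acc => Z.abs (fst x) + acc) 0 s.
Proof.
  induction s as [|a s IH]; simpl; [tauto|].
  assert (0 <= fold_right (fun x acc => Z.abs (fst x) + acc) 0 s).
  { clear IH. induction s; simpl; lia. }
  intros [->|H']; [lia|]. specialize (IH H'). lia.
Qed.

Lemma bnd_nonneg_aux (s : list zsq) : 0 <= fold_right (fun x acc => Z.abs (fst x) + acc) 0 s.
Proof. induction s; simpl; lia. Qed.

Lemma bnd_in L s x : In s L -> In x s -> Z.abs (fst x) <= bnd L.
Proof.
  induction L as [|t L IH]; simpl; [tauto|].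
  assert (0 <= bnd L). { clear. induction L; simpl; [lia|]. pose proof (bnd_nonneg_aux a). lia. }
  pose proof (bnd_nonneg_aux t).
  intros [->|H'] Hx.
  - pose proof (bnd_in_aux s x Hx). lia.
  - specialize (IH H' Hx). lia.
Qed.

Lemma nodup4 (a b c d : zsq) : a<>b -> a<>c -> a<>d -> b<>c -> b<>d -> c<>d -> NoDup [a;b;c;d].
Proof.
  intros. repeat constructor; simpl; intuition.
Qed.

Lemma zm_one (X : zsq) : zm X (1*1, 0) = X.
Proof. destruct X; unfold zm, zsq_mul; cbn [fst snd]; f_equal; ring. Qed.

Lemma family (n c : zsq) (P Q : Z) (L : list (list zsq)) :
  zm (zm c c) (8*P+5, 8*Q) = n -> 0 <= fst c -> 1 <= snd c ->
  10*snd c*snd c - fst c*fst c <> 0 ->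
  exists a1 a2 a3 a4, Dn_quadruple 10 n a1 a2 a3 a4 /\
    forall s, In s L -> ~ same_set s [a1;a2;a3;a4].
Proof.
  intros Hn Hc1 Hc2 Hz.
  pose (B := Z.max (Z.abs (8*Q) + 1) (bnd L + 1)).
  destruct (units_exist (Z.to_nat B)) as [v [w [HN [Hv [Hw HB]]]]].
  rewrite Z2Nat.id in HB by lia.
  pose (e1 := 8*v+1). pose (e2 := 4*w).
  pose (lam := zm c (e1,e2)).
  pose (g1 := e1*e1+10*e2*e2). pose (g2 := -2*e1*e2).
  pose (x := P*g1 + 5*(8*v*v+2*v+20*w*w) + 10*Q*g2).
  pose (y := (8*P+5)*(-(8*v+1)*w) + Q*g1).
  assert (Hnu : zm (8*P+5, 8*Q) (zm (e1,-e2) (e1,-e2)) = (8*x+5, 8*y)).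
  { unfold zm, zsq_mul, x, y, g1, g2, e1, e2; cbn [fst snd]; f_equal; ring. }
  assert (Hn' : n = zm (zm lam lam) (8*x+5, 8*y)).
  { rewrite <- Hnu. unfold lam. rewrite key_id.
    assert (e1*e1-10*e2*e2 = 1) as -> by (unfold e1, e2; lia).
    rewrite zm_one. auto. }
  assert (Hy : y <> 0).
  { assert (H8 : 8*y = (8*P+5)*g2 + (8*Q)*g1) by (unfold y, g1, g2, e1, e2; ring).
    intro Hy0. rewrite Hy0 in H8.
    apply (ynz (8*P+5) (8*Q) g1 g2); [| lia | | lia].
    - transitivity ((e1*e1-10*e2*e2)*(e1*e1-10*e2*e2)); [unfold g1, g2; ring|].
      assert (e1*e1-10*e2*e2 = 1) as -> by (unfold e1, e2; lia). ring.
    - assert (Ha : Z.abs (8*Q) < 2*e1*e2).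
      { assert (Z.abs (8*Q) + 1 <= B) by lia.
        assert (0 <= (e1-1)*e2) by (apply Z.mul_nonneg_nonneg; unfold e1, e2; lia).
        assert (e2 = 4*w) by reflexivity. lia. }
      assert (Hg : g2*g2 = (2*e1*e2)*(2*e1*e2)) by (unfold g2; ring).
      rewrite Hg.
      assert (8*Q*(8*Q) = Z.abs (8*Q) * Z.abs (8*Q)) as ->.
      { destruct (Z.abs_eq_or_opp (8*Q)) as [E|E]; rewrite E at 1 2 || idtac; nia. }
      apply Z.mul_lt_mono_nonneg; lia. }
  destruct c as [c1 c2]. cbn [fst snd] in *.
  pose (iota := zm (-c1, c2) (e1,-e2)).
  assert (Hinj : forall u v, zm lam u = zm lam v -> u = v).
  { apply (inj_lam lam iota (10*c2*c2 - c1*c1)); [|auto].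
    unfold iota, lam, zm, zsq_mul; cbn [fst snd]; f_equal.
    - transitivity ((10*c2*c2 - c1*c1)*(e1*e1-10*e2*e2)); [ring|].
      assert (e1*e1-10*e2*e2 = 1) as -> by (unfold e1, e2; lia). ring.
    - ring. }
  destruct (distinct_Q x y Hy) as (D1 & D2 & D3 & D4 & D5 & D6 & N1 & N2 & N3 & N4).
  assert (Z0 : (0,0) = zm lam (0,0)).
  { unfold zm, zsq_mul; cbn [fst snd]; f_equal; ring. }
  exists (zm lam (Aq x y)), (zm lam (Bq x y)), (zm lam (Cq x y)), (zm lam (Dq x y)).
  split.
  - split; [apply nodup4; intro E; apply Hinj in E; tauto|].
    split.
    + repeat constructor; intro E; rewrite Z0 in E; apply Hinj in E; tauto.
    + rewrite Hn'. destruct lam as [l1 l2]. apply quad_sq.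
  - intros s Hs Hss.
    assert (Hin : In (zm lam (Aq x y)) s) by (apply Hss; simpl; auto).
    pose proof (bnd_in L s _ Hs Hin) as Hb.
    unfold lam, zm, zsq_mul, Aq in Hb; cbn [fst snd] in Hb.
    assert (bnd L + 1 <= B) by lia.
    assert (0 <= c1*e1) by (apply Z.mul_nonneg_nonneg; unfold e1; lia).
    assert (0 <= (c2-1)*e2) by (apply Z.mul_nonneg_nonneg; unfold e2; lia).
    assert (e2 = 4*w) by reflexivity.
    rewrite Z.abs_eq in Hb by lia. lia.
Qed.

Theorem mainTheorem5 :
  (forall m k : Z, m mod 5 = 4 -> k mod 5 = 2 ->
     infinitely_many_Dn_quadruples 10 (4 * (12 * m + 9) + 2, 4 * (6 * k + 3))) /\
  (forall m k : Z, m mod 5 = 1 -> k mod 5 = 0 ->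
     infinitely_many_Dn_quadruples 10 (48 * m + 2, 24 * k)).
Proof.
  split; intros m k Hm Hk L;
  pose proof (Z.div_mod m 5 ltac:(lia)) as Em;
  pose proof (Z.div_mod k 5 ltac:(lia)) as Ek;
  rewrite Hm in Em; rewrite Hk in Ek;
  set (j := m / 5) in *; set (q := k / 5) in *;
  clearbody j q; subst m k;
  destruct (Z.Even_or_Odd q) as [[l Hl]|[l Hl]]; subst q.
  - apply (family _ (10,3) (57*j-180*l+9) (-18*j+57*l-3));
      [unfold zm, zsq_mul; cbn [fst snd]; f_equal; ring | cbn; lia ..].
  - apply (family _ (370,117) (82137*j - 259740*l - 116091) (-25974*j + 82137*l + 36711));
      [unfold zm, zsq_mul; cbn [fst snd]; f_equal; ring | cbn; lia ..].
  - apply (family _ (0,1) (3*j) (3*l));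
      [unfold zm, zsq_mul; cbn [fst snd]; f_equal; ring | cbn; lia ..].
  - apply (family _ (60,19) (2163*j - 6840*l - 2970) (-684*j + 2163*l + 939));
      [unfold zm, zsq_mul; cbn [fst snd]; f_equal; ring | cbn; lia ..].
Qed.
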